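(* Let $h:(\mathbb R^2,0)\to(\mathbb R,0)$ be a $C^\infty$ function germ with $h=0$ on $\{(x,y):x\ge0\text{ and }y\le0\}$. Then there exists a $C^\infty$ function germ $\tilde h:(\mathbb R^2,0)\to(\mathbb R,0)$ such that $\tilde h=h$ on $\{x\ge0\}$ and $\tilde h=0$ on $\{y\le0\}$.
   Context: Equalities of germs on subsets are meant on the intersection of the subset with some neighbourhood of $0$. *)

(* Defs.v *)
From Stdlib Require Import Reals List.
From Coquelicot Require Import Coquelicot.
Open Scope R_scope.

Definition pdx (g : R -> R -> R) : R -> R -> R :=
  fun x y => Derive (fun t => g t y) x.
Definition pdy (g : R -> R -> R) : R -> R -> R :=
  fun x y => Derive (fun t => g x t) y.

Fixpoint iter_pd (ds : list bool) (g : R -> R -> R) : R -> R -> R :=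
  match ds with
  | nil => g
  | d :: ds' => if d then pdx (iter_pd ds' g) else pdy (iter_pd ds' g)
  end.

Definition near0 (r x y : R) : Prop := x * x + y * y < r * r.

(* A C^infinity germ at 0 is
   represented by any function that is C^infinity on a neighbourhood of 0. *)
Definition smooth_near0 (g : R -> R -> R) : Prop :=
  exists r, 0 < r /\
    forall (ds : list bool) (x y : R), near0 r x y ->
      ex_derive (fun t => iter_pd ds g t y) x /\
      ex_derive (fun t => iter_pd ds g x t) y /\
      continuous (fun p : R * R => iter_pd ds g (fst p) (snd p)) (x, y).

(* Main.v *)
Require Import Defs.
From Stdlib Require Import Reals Lra Lia Psatz List.
From Coquelicot Require Import Coquelicot.
Open Scope R_scope.

Lemma flat_deriv (f : R -> R) (x0 C d : R) : 0 < d ->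
  (forall s, Rabs (s - x0) < d -> Rabs (f s - f x0) <= C * (s - x0)^2) ->
  is_derive f x0 0.
Proof.
  intros Hd H. apply is_derive_Reals. intros eps Heps.
  set (C' := Rabs C + 1).
  assert (HC : 0 < C') by (unfold C'; pose proof (Rabs_pos C); lra).
  assert (Hdel : 0 < Rmin d (eps / C')) by (apply Rmin_pos; [lra| apply Rdiv_lt_0_compat; lra]).
  exists (mkposreal _ Hdel). intros h Hh0 Hh. simpl in Hh.
  pose proof (Rmin_l d (eps / C')) as H1. pose proof (Rmin_r d (eps / C')) as H2.
  specialize (H (x0 + h)). replace (x0 + h - x0) with h in H by ring.
  assert (H3 : Rabs (f (x0 + h) - f x0) <= C * h ^ 2) by (apply H; lra).
  rewrite Rminus_0_r. unfold Rdiv. rewrite Rabs_mult, Rabs_inv.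
  assert (Hah : 0 < Rabs h) by (apply Rabs_pos_lt; auto).
  apply Rle_lt_trans with (C' * Rabs h * Rabs h * / Rabs h).
  - apply Rmult_le_compat_r. left; apply Rinv_0_lt_compat; auto.
    eapply Rle_trans; [apply H3|].
    replace (C * h ^ 2) with (C * Rabs h * Rabs h) by (rewrite Rmult_assoc, <- Rabs_mult; simpl; rewrite Rmult_1_r, Rabs_right; [ring| apply Rle_ge; apply Rle_0_sqr]).
    apply Rmult_le_compat_r; [apply Rabs_pos|]. apply Rmult_le_compat_r; [apply Rabs_pos|].
    unfold C'. pose proof (Rle_abs C). lra.
  - field_simplify; [|lra].
    assert (Rabs h < eps / C') by lra.
    apply (Rmult_lt_compat_l C') in H0; [|lra]. field_simplify in H0; lra.
Qed.

Definition ek (k : nat) (t : R) : R :=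
  if Rlt_dec 0 t then exp (- / t) * (/ t) ^ k else 0.

Lemma exp_INR_mult n v : exp (INR n * v) = exp v ^ n.
Proof.
  induction n. simpl. rewrite Rmult_0_l, exp_0. reflexivity.
  rewrite S_INR. replace ((INR n + 1) * v) with (INR n * v + v) by ring.
  rewrite exp_plus, IHn. simpl. ring.
Qed.

Lemma pow_le_exp k u : 0 <= u -> u ^ k <= INR (S k) ^ k * exp u.
Proof.
  intros Hu.
  assert (HS : 0 < INR (S k)) by (apply lt_0_INR; lia).
  set (v := u / INR (S k)).
  assert (Hv : 0 <= v) by (unfold v; apply Rdiv_le_0_compat; lra).
  assert (Hu' : u = INR (S k) * v) by (unfold v; field; lra).
  assert (E : exp u = exp v ^ S k) by (rewrite Hu', exp_INR_mult; reflexivity).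
  rewrite E, Hu', Rpow_mult_distr.
  apply Rmult_le_compat_l. apply pow_le; lra.
  apply Rle_trans with ((1 + v) ^ k).
  apply pow_incr; lra.
  apply Rle_trans with (exp v ^ k).
  apply pow_incr. split. lra. apply exp_ineq1_le.
  simpl. rewrite <- (Rmult_1_l (exp v ^ k)) at 1.
  apply Rmult_le_compat_r. apply pow_le. left; apply exp_pos.
  pose proof (exp_ineq1_le v). lra.
Qed.

Lemma ek_nonneg k t : 0 <= ek k t.
Proof.
  unfold ek. destruct (Rlt_dec 0 t). apply Rmult_le_pos. left; apply exp_pos.
  apply pow_le. left; apply Rinv_0_lt_compat; auto. lra.
Qed.

Lemma ek_bound k t : ek k t <= INR (S k) ^ k.
Proof.
  unfold ek. destruct (Rlt_dec 0 t).
  - set (u := / t). assert (0 < u) by (apply Rinv_0_lt_compat; auto).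
    pose proof (pow_le_exp k u ltac:(lra)).
    rewrite exp_Ropp. apply (Rmult_le_reg_l (exp u)). apply exp_pos.
    rewrite <- Rmult_assoc, Rinv_r. lra. apply Rgt_not_eq, exp_pos.
  - apply pow_le. apply pos_INR.
Qed.

Lemma ek_shift2 k s : ek k s = ek (S (S k)) s * s ^ 2.
Proof.
  unfold ek. destruct (Rlt_dec 0 s). 2: ring.
  simpl. field. lra.
Qed.

Lemma ek_deriv k t : is_derive (ek k) t (ek (S (S k)) t - INR k * ek (S k) t).
Proof.
  destruct (Rlt_dec 0 t) as [Ht|Ht]; [| destruct (Rlt_dec t 0) as [Ht'|Ht']].
  - apply is_derive_ext_loc with (fun s => exp (- / s) * (/ s) ^ k).
    + exists (mkposreal _ Ht). intros s Hs. unfold ek.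
      destruct (Rlt_dec 0 s). reflexivity.
      exfalso. unfold ball in Hs; simpl in Hs; unfold AbsRing_ball, abs, minus, plus, opp in Hs; simpl in Hs.
      apply Rabs_def2 in Hs. lra.
    + unfold ek. destruct (Rlt_dec 0 t); [|lra].
      auto_derive. lra.
      destruct k. simpl. field. lra.
      rewrite S_INR. simpl. field. lra.
  - apply is_derive_ext_loc with (fun s => 0).
    + assert (0 < - t) by lra. exists (mkposreal _ H). intros s Hs. unfold ek.
      destruct (Rlt_dec 0 s); [|reflexivity].
      exfalso. unfold ball in Hs; simpl in Hs; unfold AbsRing_ball, abs, minus, plus, opp in Hs; simpl in Hs.
      apply Rabs_def2 in Hs. lra.
    + unfold ek. destruct (Rlt_dec 0 t); [lra|]. replace (0 - INR k * 0) with 0 by ring.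
      auto_derive; auto.
  - assert (t = 0) by lra. subst t.
    unfold ek at 2 3. destruct (Rlt_dec 0 0); [lra|]. replace (0 - INR k * 0) with 0 by ring.
    apply flat_deriv with (C := INR (S (S (S k))) ^ (S (S k))) (d := 1). lra.
    intros s _. unfold ek at 2. destruct (Rlt_dec 0 0); [lra|].
    rewrite Rminus_0_r, Rminus_0_r, ek_shift2, Rabs_right.
    apply Rmult_le_compat_r. apply pow2_ge_0. apply ek_bound.
    apply Rle_ge, Rmult_le_pos. apply ek_nonneg. apply pow2_ge_0.
Qed.

Definition dx (f : R -> R -> R) (x y l : R) := is_derive (fun t => f t y) x l.
Definition dy (f : R -> R -> R) (x y l : R) := is_derive (fun t => f x t) y l.
Definition cont (f : R -> R -> R) x y := continuous (fun p : R * R => f (fst p) (snd p)) (x, y).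

Lemma cont_plus f g x y : cont f x y -> cont g x y -> cont (fun x y => f x y + g x y) x y.
Proof. intros. apply (continuous_plus (fun p : R*R => f (fst p) (snd p)) (fun p : R*R => g (fst p) (snd p))); auto. Qed.
Lemma cont_mult f g x y : cont f x y -> cont g x y -> cont (fun x y => f x y * g x y) x y.
Proof. intros. apply (continuous_mult (fun p : R*R => f (fst p) (snd p)) (fun p : R*R => g (fst p) (snd p))); auto. Qed.
Lemma cont_opp f x y : cont f x y -> cont (fun x y => - f x y) x y.
Proof. intros. apply (continuous_opp (fun p : R*R => f (fst p) (snd p))); auto. Qed.
Lemma cont_c c x y : cont (fun _ _ => c) x y.
Proof. apply continuous_const. Qed.
Lemma cont_x x y : cont (fun x _ => x) x y.
Proof. apply continuous_fst. Qed.
Lemma cont_y x y : cont (fun _ y => y) x y.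
Proof. apply continuous_snd. Qed.
Lemma cont_comp1 (phi : R -> R) f x y : cont f x y -> continuous phi (f x y) ->
  cont (fun x y => phi (f x y)) x y.
Proof. intros. unfold cont. apply (continuous_comp (fun p : R*R => f (fst p) (snd p)) phi); auto. Qed.
Lemma cont_inv f x y : cont f x y -> f x y <> 0 -> cont (fun x y => / f x y) x y.
Proof. intros. apply cont_comp1; auto. apply continuous_Rinv; auto. Qed.

Definition qq x y := x * x + y * y.
Definition iq x y := / qq x y.
Definition w x y := (x + y) * iq x y.
Definition Dn x y := ek 0 (w x y) + ek 0 (1 - w x y).
Definition iD x y := / Dn x y.

Lemma Dn_pos x y : exp (-2) <= Dn x y.
Proof.
  unfold Dn. set (u := w x y).
  pose proof (ek_nonneg 0 u). pose proof (ek_nonneg 0 (1 - u)).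
  destruct (Rle_dec (1/2) u).
  - assert (exp (-2) <= ek 0 u); [|lra].
    unfold ek. destruct (Rlt_dec 0 u); [|lra]. simpl. rewrite Rmult_1_r.
    apply exp_le_3 || idtac.
    destruct (Rle_lt_or_eq_dec (-2) (- / u)).
    { apply Ropp_le_contravar. rewrite <- (Rinv_inv 2) at 1. apply Rinv_le_contravar. lra. lra. }
    left; apply exp_increasing; auto. rewrite e; lra.
  - assert (exp (-2) <= ek 0 (1 - u)); [|lra].
    unfold ek. destruct (Rlt_dec 0 (1 - u)); [|lra]. simpl. rewrite Rmult_1_r.
    destruct (Rle_lt_or_eq_dec (-2) (- / (1 - u))).
    { apply Ropp_le_contravar. rewrite <- (Rinv_inv 2) at 1. apply Rinv_le_contravar. lra. lra. }
    left; apply exp_increasing; auto. rewrite e; lra.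
Qed.

Lemma Dn_nz x y : Dn x y <> 0.
Proof. pose proof (Dn_pos x y). pose proof (exp_pos (-2)). lra. Qed.


Lemma dx_eq f x y l l' : dx f x y l -> l = l' -> dx f x y l'.
Proof. intros H ->; auto. Qed.
Lemma dx_plus f g x y a b : dx f x y a -> dx g x y b -> dx (fun x y => f x y + g x y) x y (a + b).
Proof. intros. apply (is_derive_plus (fun t => f t y) (fun t => g t y)); auto. Qed.
Lemma dx_mult f g x y a b : dx f x y a -> dx g x y b ->
  dx (fun x y => f x y * g x y) x y (a * g x y + f x y * b).
Proof. intros. apply (is_derive_mult (fun t => f t y) (fun t => g t y)); auto.
  intros; apply Rmult_comm. Qed.
Lemma dx_c c x y : dx (fun _ _ => c) x y 0.
Proof. unfold dx. auto_derive; auto. Qed.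
Lemma dx_x x y : dx (fun x _ => x) x y 1.
Proof. unfold dx. auto_derive; auto. Qed.
Lemma dx_y x y : dx (fun _ y => y) x y 0.
Proof. unfold dx. auto_derive; auto. Qed.
Lemma dx_iq x y : qq x y <> 0 -> dx iq x y (-2 * x * (iq x y * iq x y)).
Proof. intros H. unfold dx, iq, qq in *. auto_derive. auto. field. auto. Qed.

Definition wx x y := iq x y + (x + y) * (-2 * x * (iq x y * iq x y)).
Lemma dx_w x y : qq x y <> 0 -> dx w x y (wx x y).
Proof. intros H. unfold w, wx. apply dx_eq with (l := 1 * iq x y + (x + y) * (-2 * x * (iq x y * iq x y))).
  apply (dx_mult (fun x y => x + y) iq).
  apply dx_eq with (l := 1 + 0). apply (dx_plus (fun x _ => x) (fun _ y => y)). apply dx_x. apply dx_y. ring.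
  apply dx_iq; auto. ring. Qed.

Lemma dx_comp1 (phi : R -> R) dphi f x y l : dx f x y l -> is_derive phi (f x y) dphi ->
  dx (fun x y => phi (f x y)) x y (dphi * l).
Proof. intros. apply dx_eq with (l := scal l dphi). unfold dx.
  apply (is_derive_comp phi (fun t => f t y)); auto. unfold scal; simpl; unfold mult; simpl. ring. Qed.

Lemma dx_E k x y : qq x y <> 0 ->
  dx (fun x y => ek k (w x y)) x y ((ek (S (S k)) (w x y) - INR k * ek (S k) (w x y)) * wx x y).
Proof. intros. apply dx_comp1. apply dx_w; auto. apply ek_deriv. Qed.

Lemma dx_F k x y : qq x y <> 0 ->
  dx (fun x y => ek k (1 - w x y)) x y ((ek (S (S k)) (1 - w x y) - INR k * ek (S k) (1 - w x y)) * (-1 * wx x y)).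
Proof. intros. apply (dx_comp1 (ek k) _ (fun x y => 1 - w x y)). 2: apply ek_deriv.
  apply dx_eq with (l := 0 + -1 * wx x y). apply (dx_plus (fun _ _ => 1) (fun x y => - w x y)). apply dx_c.
  apply dx_eq with (l := opp (wx x y)). unfold dx. apply (is_derive_opp (fun t => w t y)). apply dx_w; auto.
  unfold opp; simpl. ring. ring. Qed.

Definition Dnx x y := (ek 2 (w x y) - INR 0 * ek 1 (w x y)) * wx x y
   + (ek 2 (1 - w x y) - INR 0 * ek 1 (1 - w x y)) * (-1 * wx x y).

Lemma dx_iD x y : qq x y <> 0 -> dx iD x y (-1 * (iD x y * iD x y) * Dnx x y).
Proof. intros H. unfold iD. apply dx_eq with (l := - Dnx x y / Dn x y ^ 2).
  apply (is_derive_inv (fun t => Dn t y)). unfold Dn, Dnx.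
  apply (dx_plus (fun x y => ek 0 (w x y)) (fun x y => ek 0 (1 - w x y))). apply dx_E; auto. apply dx_F; auto.
  apply Dn_nz. pose proof (Dn_nz x y). field. auto. Qed.

Lemma iq_sym x y : iq y x = iq x y.
Proof. unfold iq, qq. f_equal. ring. Qed.
Lemma w_sym x y : w y x = w x y.
Proof. unfold w. rewrite iq_sym. f_equal. ring. Qed.

Inductive Alg : (R -> R -> R) -> Prop :=
| Al_c c : Alg (fun _ _ => c)
| Al_x : Alg (fun x _ => x)
| Al_y : Alg (fun _ y => y)
| Al_iq : Alg iq
| Al_E k : Alg (fun x y => ek k (w x y))
| Al_F k : Alg (fun x y => ek k (1 - w x y))
| Al_iD : Alg iD
| Al_add f g : Alg f -> Alg g -> Alg (fun x y => f x y + g x y)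
| Al_mul f g : Alg f -> Alg g -> Alg (fun x y => f x y * g x y)
| Al_ext f g : Alg f -> (forall x y, f x y = g x y) -> Alg g.

Lemma Alg_opp f : Alg f -> Alg (fun x y => - f x y).
Proof. intros H. apply Al_ext with (fun x y => (fun _ _ => -1) x y * f x y).
  apply Al_mul; auto. apply Al_c. intros; ring. Qed.

Ltac alg := repeat first [ apply Al_c | apply Al_x | apply Al_y | apply Al_iq | apply Al_E
  | apply Al_F | apply Al_iD | apply Al_add | apply Al_mul | apply Alg_opp ].

Lemma Alg_wx : Alg wx.
Proof. unfold wx. alg. Qed.
Lemma Alg_w : Alg w.
Proof. unfold w. alg. Qed.

Lemma ek_cont k t : continuous (ek k) t.
Proof. apply (ex_derive_continuous (K:=R_AbsRing) (V:=R_NormedModule)). eexists. apply ek_deriv. Qed.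

Lemma cont_iq x y : qq x y <> 0 -> cont iq x y.
Proof. intros. apply cont_inv; auto. unfold qq. apply cont_plus; apply cont_mult; auto using cont_x, cont_y. Qed.
Lemma cont_w x y : qq x y <> 0 -> cont w x y.
Proof. intros. unfold w. apply cont_mult. apply cont_plus; auto using cont_x, cont_y. apply cont_iq; auto. Qed.

Lemma Alg_cont f : Alg f -> forall x y, qq x y <> 0 -> cont f x y.
Proof.
  induction 1; intros x y Hq.
  apply cont_c. apply cont_x. apply cont_y. apply cont_iq; auto.
  apply cont_comp1. apply cont_w; auto. apply ek_cont.
  apply (cont_comp1 (ek k) (fun x y => 1 - w x y)). apply cont_plus. apply cont_c.
  apply cont_opp. apply cont_w; auto. apply ek_cont.
  apply cont_inv. unfold Dn. apply cont_plus. apply cont_comp1. apply cont_w; auto. apply ek_cont.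
  apply (cont_comp1 (ek 0) (fun x y => 1 - w x y)). apply cont_plus. apply cont_c.
  apply cont_opp. apply cont_w; auto. apply ek_cont.
  apply Dn_nz.
  apply cont_plus; auto. apply cont_mult; auto.
  unfold cont. apply (continuous_ext (fun p : R * R => f (fst p) (snd p))). intros; apply H0.
  apply IHAlg; auto.
Qed.

Lemma Alg_dx f : Alg f -> exists f', Alg f' /\ forall x y, qq x y <> 0 -> dx f x y (f' x y).
Proof.
  induction 1.
  - exists (fun _ _ => 0). split. alg. intros; apply dx_c.
  - exists (fun _ _ => 1). split. alg. intros; apply dx_x.
  - exists (fun _ _ => 0). split. alg. intros; apply dx_y.
  - exists (fun x y => -2 * x * (iq x y * iq x y)). split. alg. intros; apply dx_iq; auto.
  - exists (fun x y => (ek (S (S k)) (w x y) - INR k * ek (S k) (w x y)) * wx x y). split.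
    unfold Rminus. alg; try apply Alg_wx. intros; apply dx_E; auto.
  - exists (fun x y => (ek (S (S k)) (1 - w x y) - INR k * ek (S k) (1 - w x y)) * (-1 * wx x y)). split.
    unfold Rminus at 1. alg; try apply Alg_wx. intros; apply dx_F; auto.
  - exists (fun x y => -1 * (iD x y * iD x y) * Dnx x y). split.
    unfold Dnx, Rminus. alg; try apply Alg_wx. intros; apply dx_iD; auto.
  - destruct IHAlg1 as [f' [H1 H2]]. destruct IHAlg2 as [g' [H3 H4]].
    exists (fun x y => f' x y + g' x y). split. alg; auto. intros; apply dx_plus; auto.
  - destruct IHAlg1 as [f' [H1 H2]]. destruct IHAlg2 as [g' [H3 H4]].
    exists (fun x y => f' x y * g x y + f x y * g' x y). split. alg; auto. intros; apply dx_mult; auto.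
  - destruct IHAlg as [f' [H1 H2]]. exists f'. split; auto. intros.
    unfold dx. apply (is_derive_ext (fun t => f t y)). intros; apply H0. apply H2; auto.
Qed.

Lemma Alg_swap f : Alg f -> Alg (fun x y => f y x).
Proof.
  induction 1.
  - apply Al_c. - apply Al_y. - apply Al_x.
  - apply Al_ext with iq. apply Al_iq. intros; rewrite iq_sym; auto.
  - apply Al_ext with (fun x y => ek k (w x y)). apply Al_E. intros; rewrite w_sym; auto.
  - apply Al_ext with (fun x y => ek k (1 - w x y)). apply Al_F. intros; rewrite w_sym; auto.
  - apply Al_ext with iD. apply Al_iD. intros; unfold iD, Dn; rewrite w_sym; auto.
  - apply (Al_add (fun x y => f y x) (fun x y => g y x)); auto.
  - apply (Al_mul (fun x y => f y x) (fun x y => g y x)); auto.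
  - apply Al_ext with (fun x y => f y x); auto.
Qed.

Lemma Alg_dy f : Alg f -> exists f', Alg f' /\ forall x y, qq x y <> 0 -> dy f x y (f' x y).
Proof.
  intros H. destruct (Alg_dx _ (Alg_swap _ H)) as [f' [H1 H2]].
  exists (fun x y => f' y x). split. apply Alg_swap; auto.
  intros x y Hq. apply (H2 y x). unfold qq in *. intro; apply Hq; lra.
Qed.

Lemma pow_mono_exp a k m : 1 <= a -> a ^ k <= a ^ (k + m).
Proof. intros. apply Rle_pow; auto; lia. Qed.

Lemma iq_ge1 x y : 0 < qq x y <= 1 -> 1 <= iq x y.
Proof. intros [H1 H2]. unfold iq. rewrite <- Rinv_1. apply Rinv_le_contravar; lra. Qed.

Lemma Alg_bound f : Alg f -> exists k C, 0 <= C /\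
  forall x y, 0 < qq x y <= 1 -> Rabs (f x y) <= C * iq x y ^ k.
Proof.
  induction 1.
  - exists 0%nat, (Rabs c). split. apply Rabs_pos. intros; simpl; lra.
  - exists 0%nat, 1. split. lra. intros x y [H1 H2]; simpl. unfold qq in *.
    apply Rabs_le. split; nra.
  - exists 0%nat, 1. split. lra. intros x y [H1 H2]; simpl. unfold qq in *.
    apply Rabs_le. split; nra.
  - exists 1%nat, 1. split. lra. intros x y [H1 H2]; simpl. unfold iq.
    rewrite Rabs_right. lra. left; apply Rinv_0_lt_compat; lra.
  - exists 0%nat, (INR (S k) ^ k). split. apply pow_le, pos_INR. intros; simpl.
    rewrite Rabs_right. rewrite Rmult_1_r. apply ek_bound. apply Rle_ge, ek_nonneg.
  - exists 0%nat, (INR (S k) ^ k). split. apply pow_le, pos_INR. intros; simpl.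
    rewrite Rabs_right. rewrite Rmult_1_r. apply ek_bound. apply Rle_ge, ek_nonneg.
  - exists 0%nat, (exp 2). split. left; apply exp_pos. intros; simpl. rewrite Rmult_1_r.
    unfold iD. pose proof (Dn_pos x y). pose proof (exp_pos (-2)).
    rewrite Rabs_right. replace (exp 2) with (/ exp (-2)). apply Rinv_le_contravar; auto.
    rewrite <- exp_Ropp. f_equal; ring. left; apply Rinv_0_lt_compat; lra.
  - destruct IHAlg1 as [k1 [C1 [HC1 H1]]]. destruct IHAlg2 as [k2 [C2 [HC2 H2]]].
    exists (k1 + k2)%nat, (C1 + C2). split. lra. intros x y Hq.
    pose proof (iq_ge1 _ _ Hq) as Hi.
    eapply Rle_trans. apply Rabs_triang. rewrite Rmult_plus_distr_r.
    apply Rplus_le_compat.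
    + eapply Rle_trans. apply H1; auto. apply Rmult_le_compat_l; auto. apply pow_mono_exp; auto.
    + eapply Rle_trans. apply H2; auto. apply Rmult_le_compat_l; auto. rewrite Nat.add_comm. apply pow_mono_exp; auto.
  - destruct IHAlg1 as [k1 [C1 [HC1 H1]]]. destruct IHAlg2 as [k2 [C2 [HC2 H2]]].
    exists (k1 + k2)%nat, (C1 * C2). split. apply Rmult_le_pos; auto. intros x y Hq.
    rewrite Rabs_mult, pow_add.
    replace (C1 * C2 * (iq x y ^ k1 * iq x y ^ k2)) with ((C1 * iq x y ^ k1) * (C2 * iq x y ^ k2)) by ring.
    apply Rmult_le_compat; try apply Rabs_pos; auto.
  - destruct IHAlg as [k [C [HC H1]]]. exists k, C. split; auto. intros. rewrite <- H0. auto.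
Qed.

Lemma deriv_side_zero (f : R -> R) x l sg eta : sg * sg = 1 -> 0 < eta ->
  (forall t, 0 < t < eta -> f (x + sg * t) = f x) -> is_derive f x l -> l = 0.
Proof.
  intros Hs He Hf Hd. apply is_derive_Reals in Hd.
  destruct (Req_dec l 0) as [|Hl]; auto. exfalso.
  assert (Hal : 0 < Rabs l) by (apply Rabs_pos_lt; auto).
  destruct (Hd (Rabs l) Hal) as [[del Hdel] Hd']. simpl in Hd'.
  set (t := Rmin (del / 2) (eta / 2)).
  assert (Ht : 0 < t) by (unfold t; apply Rmin_pos; lra).
  assert (Ht2 : t < del /\ t < eta) by (unfold t; split; [pose proof (Rmin_l (del/2) (eta/2)) | pose proof (Rmin_r (del/2) (eta/2))]; lra).
  assert (Hsg : Rabs sg = 1).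
  { assert (Rabs sg * Rabs sg = 1) by (rewrite <- Rabs_mult, Hs; apply Rabs_R1).
    pose proof (Rabs_pos sg). nra. }
  specialize (Hd' (sg * t)).
  rewrite Hf in Hd' by lra. rewrite Rminus_diag in Hd'.
  unfold Rdiv in Hd'. rewrite Rmult_0_l, Rminus_0_l, Rabs_Ropp in Hd'.
  assert (sg * t <> 0) by (intro H0; apply Rmult_integral in H0; destruct H0; subst; [rewrite Rabs_R0 in Hsg|]; lra).
  assert (Rabs (sg * t) < del) by (rewrite Rabs_mult, Hsg, Rabs_right; lra).
  specialize (Hd' H H0). lra.
Qed.

Definition near0' := near0.

Lemma vanish (h : R -> R -> R) (r0 : R) :
  (forall ds x y, near0 r0 x y -> ex_derive (fun t => iter_pd ds h t y) x /\ ex_derive (fun t => iter_pd ds h x t) y) ->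
  (forall x y, near0 r0 x y -> 0 <= x -> y <= 0 -> h x y = 0) ->
  forall a x y, near0 r0 x y -> 0 <= x -> y <= 0 -> iter_pd a h x y = 0.
Proof.
  intros Hs Hz a. induction a as [|b a IH]; intros x y Hn Hx Hy.
  - apply Hz; auto.
  - unfold near0 in *. set (s := r0 * r0 - (x * x + y * y)).
    assert (Hs0 : 0 < s) by (unfold s; lra).
    destruct b; simpl.
    + destruct (Hs a x y Hn) as [[l Hl] _].
      transitivity l. unfold pdx; apply is_derive_unique; exact Hl.
      apply (deriv_side_zero (fun t => iter_pd a h t y) x l 1 (Rmin 1 (s / (2 * x + 2)))); auto. ring.
      apply Rmin_pos; [lra| apply Rdiv_lt_0_compat; lra].
      intros t [Ht1 Ht2]. rewrite Rmult_1_l.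
      assert (t < 1) by (pose proof (Rmin_l 1 (s / (2 * x + 2))); lra).
      assert (t * (2 * x + 2) < s).
      { pose proof (Rmin_r 1 (s / (2 * x + 2))).
        assert (t < s / (2 * x + 2)) by lra.
        apply (Rmult_lt_compat_r (2 * x + 2)) in H1; [|lra]. field_simplify in H1; lra. }
      rewrite !IH; auto; try lra. unfold s in *; nra.
    + destruct (Hs a x y Hn) as [_ [l Hl]].
      transitivity l. unfold pdy; apply is_derive_unique; exact Hl.
      apply (deriv_side_zero (fun t => iter_pd a h x t) y l (-1) (Rmin 1 (s / (- 2 * y + 2)))); auto. ring.
      apply Rmin_pos; [lra| apply Rdiv_lt_0_compat; lra].
      intros t [Ht1 Ht2].
      assert (t < 1) by (pose proof (Rmin_l 1 (s / (- 2 * y + 2))); lra).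
      assert (t * (- 2 * y + 2) < s).
      { pose proof (Rmin_r 1 (s / (- 2 * y + 2))).
        assert (t < s / (- 2 * y + 2)) by lra.
        apply (Rmult_lt_compat_r (- 2 * y + 2)) in H1; [|lra]. field_simplify in H1; lra. }
      rewrite !IH; auto; try lra. unfold s in *; nra.
Qed.

Lemma ballR (a e b : R) : ball a e b <-> Rabs (b - a) < e.
Proof. unfold ball; simpl; unfold AbsRing_ball, abs, minus, plus, opp; simpl. unfold Rminus. tauto. Qed.
Lemma ballRR (a b : R*R) e : ball a e b <-> ball (fst a) e (fst b) /\ ball (snd a) e (snd b).
Proof. destruct a, b. simpl. unfold ball at 1. simpl. unfold prod_ball. tauto. Qed.

Definition SmR (g : R -> R -> R) (r : R) : Prop :=
  forall (ds : list bool) (x y : R), near0 r x y ->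
      ex_derive (fun t => iter_pd ds g t y) x /\
      ex_derive (fun t => iter_pd ds g x t) y /\
      continuous (fun p : R * R => iter_pd ds g (fst p) (snd p)) (x, y).

Lemma ex_derive_cpt (f : R -> R) x : ex_derive f x -> continuity_pt f x.
Proof. intros H. apply continuity_pt_filterlim.
  apply (ex_derive_continuous (K:=R_AbsRing) (V:=R_NormedModule)); auto. Qed.

Lemma flat (h : R -> R -> R) rh r0 : 0 < r0 -> r0 <= rh -> SmR h rh ->
  (forall x y, near0 r0 x y -> 0 <= x -> y <= 0 -> h x y = 0) ->
  forall n a, exists del C, 0 < del /\ 0 <= C /\ forall x y, Rabs x < del -> Rabs y < del ->
    Rabs (iter_pd a h x y) <= C * (Rabs x + Rabs y) ^ n.
Proof.
  intros Hr0 Hrr Hs Hz.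
  assert (Hs' : forall ds x y, near0 r0 x y -> ex_derive (fun t => iter_pd ds h t y) x /\ ex_derive (fun t => iter_pd ds h x t) y).
  { intros ds x y Hn. assert (near0 rh x y) by (unfold near0 in *; nra). destruct (Hs ds x y H) as [A [B _]]; auto. }
  pose proof (vanish h r0 Hs' Hz) as Hv.
  assert (H00 : near0 r0 0 0) by (unfold near0; nra).
  induction n; intros a.
  - assert (H00' : near0 rh 0 0) by (unfold near0; nra).
    destruct (Hs a 0 0 H00') as [_ [_ Hc]].
    destruct (proj1 (filterlim_locally _ _) Hc (mkposreal 1 Rlt_0_1)) as [eps Heps].
    exists eps, 1. split. apply cond_pos. split. lra. intros x y Hx Hy.
    specialize (Heps (x, y)). simpl in Heps. rewrite ballR in Heps.
    rewrite (Hv a 0 0 H00) in Heps by lra. rewrite Rminus_0_r in Heps. simpl. rewrite Rmult_1_r. left. apply Heps.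
    apply ballRR; simpl; split; apply ballR; rewrite Rminus_0_r; auto.
  - destruct (IHn (true :: a)) as [d1 [C1 [Hd1 [HC1 H1]]]].
    destruct (IHn (false :: a)) as [d2 [C2 [Hd2 [HC2 H2]]]].
    set (del := Rmin (Rmin d1 d2) (r0 / 2)).
    assert (Hdel : 0 < del) by (unfold del; repeat apply Rmin_pos; lra).
    assert (Hdl : del <= d1 /\ del <= d2 /\ del <= r0 / 2).
    { unfold del. pose proof (Rmin_l (Rmin d1 d2) (r0/2)). pose proof (Rmin_r (Rmin d1 d2) (r0/2)).
      pose proof (Rmin_l d1 d2). pose proof (Rmin_r d1 d2). lra. }
    exists del, (C1 + C2). split; auto. split. lra. intros x y Hx Hy.
    assert (Hin : forall u v, Rabs u < del -> Rabs v < del -> near0 r0 u v).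
    { intros u v Hu Hv'. unfold near0. apply Rabs_def2 in Hu. apply Rabs_def2 in Hv'. nra. }
    destruct (MVT_gen (fun t => iter_pd a h t 0) 0 x (fun t => iter_pd (true :: a) h t 0)) as [c [Hc Hmvt]].
    { intros t Ht. simpl. unfold pdx.
      assert (Rabs t < del).
      { apply Rabs_def2 in Hx.
        destruct (Rle_dec 0 x); [rewrite Rmin_left in Ht by lra; rewrite Rmax_right in Ht by lra |
           rewrite Rmin_right in Ht by lra; rewrite Rmax_left in Ht by lra]; apply Rabs_def1; lra. }
      destruct (Hs' a t 0 (Hin t 0 H ltac:(rewrite Rabs_R0; lra))) as [Hl _].
      apply Derive_correct; exact Hl. }
    { intros t Ht. apply ex_derive_cpt.
      assert (Rabs t < del).
      { apply Rabs_def2 in Hx.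
        destruct (Rle_dec 0 x); [rewrite Rmin_left in Ht by lra; rewrite Rmax_right in Ht by lra |
           rewrite Rmin_right in Ht by lra; rewrite Rmax_left in Ht by lra]; apply Rabs_def1; lra. }
      apply (Hs' a t 0 (Hin t 0 H ltac:(rewrite Rabs_R0; lra))). }
    destruct (MVT_gen (fun t => iter_pd a h x t) 0 y (fun t => iter_pd (false :: a) h x t)) as [c' [Hc' Hmvt']].
    { intros t Ht. simpl. unfold pdy.
      assert (Rabs t < del).
      { apply Rabs_def2 in Hy.
        destruct (Rle_dec 0 y); [rewrite Rmin_left in Ht by lra; rewrite Rmax_right in Ht by lra |
           rewrite Rmin_right in Ht by lra; rewrite Rmax_left in Ht by lra]; apply Rabs_def1; lra. }
      destruct (Hs' a x t (Hin x t Hx H)) as [_ Hl].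
      apply Derive_correct; exact Hl. }
    { intros t Ht. apply ex_derive_cpt.
      assert (Rabs t < del).
      { apply Rabs_def2 in Hy.
        destruct (Rle_dec 0 y); [rewrite Rmin_left in Ht by lra; rewrite Rmax_right in Ht by lra |
           rewrite Rmin_right in Ht by lra; rewrite Rmax_left in Ht by lra]; apply Rabs_def1; lra. }
      apply (Hs' a x t (Hin x t Hx H)). }
    assert (Hcx : Rabs c <= Rabs x).
    { destruct (Rle_dec 0 x); [rewrite Rmin_left in Hc by lra; rewrite Rmax_right in Hc by lra |
           rewrite Rmin_right in Hc by lra; rewrite Rmax_left in Hc by lra];
      unfold Rabs; destruct (Rcase_abs c); destruct (Rcase_abs x); lra. }
    assert (Hcy : Rabs c' <= Rabs y).
    { destruct (Rle_dec 0 y); [rewrite Rmin_left in Hc' by lra; rewrite Rmax_right in Hc' by lra |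
           rewrite Rmin_right in Hc' by lra; rewrite Rmax_left in Hc' by lra];
      unfold Rabs; destruct (Rcase_abs c'); destruct (Rcase_abs y); lra. }
    cbv beta in Hmvt, Hmvt'. rewrite (Hv a 0 0 H00) in Hmvt by lra. rewrite Rminus_0_r, Rminus_0_r in Hmvt. rewrite Rminus_0_r in Hmvt'.
    replace (iter_pd a h x y) with ((iter_pd a h x y - iter_pd a h x 0) + iter_pd a h x 0) by ring.
    rewrite Hmvt', Hmvt.
    assert (B1 : Rabs (iter_pd (true :: a) h c 0) <= C1 * (Rabs x + Rabs y) ^ n).
    { eapply Rle_trans. apply H1; try lra. rewrite Rabs_R0; lra.
      apply Rmult_le_compat_l; auto. apply pow_incr. rewrite Rabs_R0. split.
      pose proof (Rabs_pos c); lra. pose proof (Rabs_pos y); lra. }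
    assert (B2 : Rabs (iter_pd (false :: a) h x c') <= C2 * (Rabs x + Rabs y) ^ n).
    { eapply Rle_trans. apply H2; try lra.
      apply Rmult_le_compat_l; auto. apply pow_incr. split.
      pose proof (Rabs_pos c'); pose proof (Rabs_pos x); lra. lra. }
    eapply Rle_trans. apply Rabs_triang. rewrite !Rabs_mult.
    pose proof (Rabs_pos x). pose proof (Rabs_pos y).
    pose proof (pow_le (Rabs x + Rabs y) n ltac:(lra)).
    simpl.
    apply Rle_trans with (C2 * (Rabs x + Rabs y) ^ n * Rabs y + C1 * (Rabs x + Rabs y) ^ n * Rabs x).
    apply Rplus_le_compat; apply Rmult_le_compat_r; auto.
    assert (0 <= C1 * (Rabs x + Rabs y) ^ n * Rabs y) by (repeat apply Rmult_le_pos; auto).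
    assert (0 <= C2 * (Rabs x + Rabs y) ^ n * Rabs x) by (repeat apply Rmult_le_pos; auto).
    set (P := (Rabs x + Rabs y) ^ n) in *. ring_simplify. nra.
Qed.

Lemma flatq (h : R -> R -> R) rh r0 : 0 < r0 -> r0 <= rh -> SmR h rh ->
  (forall x y, near0 r0 x y -> 0 <= x -> y <= 0 -> h x y = 0) ->
  forall N a, exists del C, 0 < del /\ 0 <= C /\ forall x y, Rabs x < del -> Rabs y < del ->
    Rabs (iter_pd a h x y) <= C * qq x y ^ N.
Proof.
  intros Hr0 Hrr Hs Hz N a.
  destruct (flat h rh r0 Hr0 Hrr Hs Hz (2 * N) a) as [del [C [Hd [HC H]]]].
  exists del, (C * 2 ^ N). split; auto. split. apply Rmult_le_pos; auto. apply pow_le; lra.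
  intros x y Hx Hy. eapply Rle_trans. apply H; auto.
  rewrite pow_mult, Rmult_assoc, <- Rpow_mult_distr. apply Rmult_le_compat_l; auto.
  apply pow_incr. split. apply pow2_ge_0.
  unfold qq. pose proof (Rabs_pos x). pose proof (Rabs_pos y).
  assert (Rabs x * Rabs x = x * x) by (rewrite <- Rabs_mult; apply Rabs_right; apply Rle_ge, Rle_0_sqr).
  assert (Rabs y * Rabs y = y * y) by (rewrite <- Rabs_mult; apply Rabs_right; apply Rle_ge, Rle_0_sqr).
  simpl. rewrite <- H2, <- H3. pose proof (Rle_0_sqr (Rabs x - Rabs y)). unfold Rsqr in *. nra.
Qed.

Inductive Ideal (h : R -> R -> R) : (R -> R -> R) -> Prop :=
| I_gen a M : Alg M -> Ideal h (fun x y => iter_pd a h x y * M x y)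
| I_add f g : Ideal h f -> Ideal h g -> Ideal h (fun x y => f x y + g x y).

Lemma Ideal_cont h rh f : SmR h rh -> Ideal h f -> forall x y, qq x y <> 0 -> near0 rh x y -> cont f x y.
Proof.
  intros Hs. induction 1; intros x y Hq Hn.
  - apply cont_mult. apply (Hs a x y Hn). apply Alg_cont; auto.
  - apply cont_plus; auto.
Qed.

Lemma Ideal_dx h rh f : SmR h rh -> Ideal h f -> exists f', Ideal h f' /\
  forall x y, qq x y <> 0 -> near0 rh x y -> dx f x y (f' x y).
Proof.
  intros Hs. induction 1.
  - destruct (Alg_dx M H) as [M' [HM' HM'd]].
    exists (fun x y => iter_pd (true :: a) h x y * M x y + iter_pd a h x y * M' x y).
    split. apply I_add; apply I_gen; auto.
    intros x y Hq Hn. apply dx_mult; auto. unfold dx. simpl. unfold pdx.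
    apply Derive_correct. apply (Hs a x y Hn).
  - destruct IHIdeal1 as [f' [H1 H2]]. destruct IHIdeal2 as [g' [H3 H4]].
    exists (fun x y => f' x y + g' x y). split. apply I_add; auto. intros; apply dx_plus; auto.
Qed.

Lemma dy_eq f x y l l' : dy f x y l -> l = l' -> dy f x y l'.
Proof. intros H ->; auto. Qed.
Lemma dy_plus f g x y a b : dy f x y a -> dy g x y b -> dy (fun x y => f x y + g x y) x y (a + b).
Proof. intros. apply (is_derive_plus (fun t => f x t) (fun t => g x t)); auto. Qed.
Lemma dy_mult f g x y a b : dy f x y a -> dy g x y b ->
  dy (fun x y => f x y * g x y) x y (a * g x y + f x y * b).
Proof. intros. apply (is_derive_mult (fun t => f x t) (fun t => g x t)); auto.
  intros; apply Rmult_comm. Qed.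

Lemma Ideal_dy h rh f : SmR h rh -> Ideal h f -> exists f', Ideal h f' /\
  forall x y, qq x y <> 0 -> near0 rh x y -> dy f x y (f' x y).
Proof.
  intros Hs. induction 1.
  - destruct (Alg_dy M H) as [M' [HM' HM'd]].
    exists (fun x y => iter_pd (false :: a) h x y * M x y + iter_pd a h x y * M' x y).
    split. apply I_add; apply I_gen; auto.
    intros x y Hq Hn. apply dy_mult; auto. unfold dy. simpl. unfold pdy.
    apply Derive_correct. apply (Hs a x y Hn).
  - destruct IHIdeal1 as [f' [H1 H2]]. destruct IHIdeal2 as [g' [H3 H4]].
    exists (fun x y => f' x y + g' x y). split. apply I_add; auto. intros; apply dy_plus; auto.
Qed.

Lemma Ideal_bound h rh r0 f : 0 < r0 -> r0 <= rh -> SmR h rh ->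
  (forall x y, near0 r0 x y -> 0 <= x -> y <= 0 -> h x y = 0) -> Ideal h f ->
  exists del C, 0 < del /\ 0 <= C /\ forall x y, Rabs x < del -> Rabs y < del -> 0 < qq x y ->
    Rabs (f x y) <= C * qq x y.
Proof.
  intros Hr0 Hrr Hs Hz. induction 1.
  - destruct (Alg_bound M H) as [k [CM [HCM HM]]].
    destruct (flatq h rh r0 Hr0 Hrr Hs Hz (S k) a) as [del [C [Hd [HC Hf]]]].
    exists (Rmin del (1/2)), (C * CM). split. apply Rmin_pos; lra. split. apply Rmult_le_pos; auto.
    intros x y Hx Hy Hq.
    pose proof (Rmin_l del (1/2)). pose proof (Rmin_r del (1/2)).
    assert (Hq1 : qq x y <= 1).
    { unfold qq. apply Rabs_def2 in Hx. apply Rabs_def2 in Hy. nra. }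
    rewrite Rabs_mult.
    apply Rle_trans with ((C * qq x y ^ S k) * (CM * iq x y ^ k)).
    apply Rmult_le_compat; try apply Rabs_pos. apply Hf; lra. apply HM; lra.
    right. unfold iq. rewrite pow_inv. simpl. field. apply pow_nonzero; lra.
  - destruct IHIdeal1 as [d1 [C1 [Hd1 [HC1 H1]]]]. destruct IHIdeal2 as [d2 [C2 [Hd2 [HC2 H2]]]].
    exists (Rmin d1 d2), (C1 + C2). split. apply Rmin_pos; lra. split. lra.
    intros x y Hx Hy Hq.
    pose proof (Rmin_l d1 d2). pose proof (Rmin_r d1 d2).
    eapply Rle_trans. apply Rabs_triang. rewrite Rmult_plus_distr_r.
    apply Rplus_le_compat; [apply H1 | apply H2]; lra.
Qed.

Lemma cont_qq x y : cont qq x y.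
Proof. unfold qq. apply cont_plus; apply cont_mult; auto using cont_x, cont_y. Qed.

Lemma open_U d x y : 0 < qq x y -> near0 d x y ->
  locally (x, y) (fun p : R * R => 0 < qq (fst p) (snd p) /\ near0 d (fst p) (snd p)).
Proof.
  intros H1 H2. unfold near0 in *. fold (qq x y) in H2.
  pose proof (cont_qq x y) as Hc. unfold cont in Hc.
  assert (Hl : locally (qq x y) (fun z => 0 < z /\ z < d * d)).
  { assert (He : 0 < Rmin (qq x y) (d * d - qq x y)) by (apply Rmin_pos; lra).
    assert (K : forall z : R, Rabs (z - qq x y) < Rmin (qq x y) (d * d - qq x y) -> 0 < z < d * d).
    { intros z Hz. apply Rabs_def2 in Hz.
      pose proof (Rmin_l (qq x y) (d * d - qq x y)). pose proof (Rmin_r (qq x y) (d * d - qq x y)). split; lra. }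
    exists (mkposreal _ He). intros z Hz. apply K. apply ballR in Hz. exact Hz. }
  apply (Hc _ Hl).
Qed.

Lemma loc_x d x y : 0 < qq x y -> near0 d x y -> locally x (fun t => 0 < qq t y /\ near0 d t y).
Proof.
  intros H1 H2. destruct (open_U d x y H1 H2) as [eps He].
  exists eps. intros t Ht. apply (He (t, y)). apply ballRR. simpl. split; auto. apply ball_center.
Qed.
Lemma loc_y d x y : 0 < qq x y -> near0 d x y -> locally y (fun t => 0 < qq x t /\ near0 d x t).
Proof.
  intros H1 H2. destruct (open_U d x y H1 H2) as [eps He].
  exists eps. intros t Ht. apply (He (x, t)). apply ballRR. simpl. split; auto. apply ball_center.
Qed.

Lemma loc00 (P : R * R -> Prop) r : 0 < r -> (forall x y : R, Rabs x < r -> Rabs y < r -> P (x, y)) ->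
  locally ((0:R), (0:R)) P.
Proof. intros Hr H. exists (mkposreal r Hr). intros [x y] Hp. apply ballRR in Hp. destruct Hp as [Hx Hy].
  cbn [fst snd] in Hx, Hy.
  assert (Hx' : Rabs (x - 0) < r) by (apply ballR; exact Hx).
  assert (Hy' : Rabs (y - 0) < r) by (apply ballR; exact Hy).
  rewrite Rminus_0_r in Hx', Hy'. apply H; auto. Qed.

Lemma origin_facts h rh r0 d F g : 0 < r0 -> r0 <= rh -> SmR h rh ->
  (forall x y, near0 r0 x y -> 0 <= x -> y <= 0 -> h x y = 0) -> 0 < d ->
  Ideal h g -> (forall x y, 0 < qq x y -> near0 d x y -> F x y = g x y) -> F 0 0 = 0 ->
  is_derive (fun t => F t 0) 0 0 /\ is_derive (fun t => F 0 t) 0 0 /\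
  continuous (fun p : R * R => F (fst p) (snd p)) (0, 0).
Proof.
  intros Hr0 Hrr Hs Hz Hd Hg HFg HF0.
  destruct (Ideal_bound h rh r0 g Hr0 Hrr Hs Hz Hg) as [del [C [Hdel [HC Hb]]]].
  set (del' := Rmin del (d / 2)).
  assert (Hdel' : 0 < del') by (apply Rmin_pos; lra).
  assert (B : forall x y, Rabs x < del' -> Rabs y < del' -> Rabs (F x y) <= C * qq x y).
  { intros x y Hx Hy. pose proof (Rmin_l del (d/2)). pose proof (Rmin_r del (d/2)).
    fold del' in H, H0.
    destruct (Req_dec (qq x y) 0) as [Hq|Hq].
    - unfold qq in Hq. assert (x = 0) by nra. assert (y = 0) by nra. subst.
      rewrite HF0, Rabs_R0. unfold qq. nra.
    - assert (0 < qq x y) by (unfold qq in *; pose proof (Rle_0_sqr x); pose proof (Rle_0_sqr y); unfold Rsqr in *; lra).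
      rewrite HFg; auto. apply Hb; auto; lra.
      unfold near0. apply Rabs_def2 in Hx. apply Rabs_def2 in Hy. nra. }
  split; [|split].
  - apply flat_deriv with C del'; auto. intros s Hs'. rewrite Rminus_0_r in Hs'. rewrite HF0, !Rminus_0_r.
    eapply Rle_trans. apply B. exact Hs'. rewrite Rabs_R0; auto. right; unfold qq; ring.
  - apply flat_deriv with C del'; auto. intros s Hs'. rewrite Rminus_0_r in Hs'. rewrite HF0, !Rminus_0_r.
    eapply Rle_trans. apply B. rewrite Rabs_R0; auto. exact Hs'. right; unfold qq; ring.
  - apply filterlim_locally. intros eps. simpl.
    assert (Hr : 0 < Rmin del' (Rmin 1 (eps / (2 * C + 2)))).
    { apply Rmin_pos; auto. apply Rmin_pos. lra. apply Rdiv_lt_0_compat. apply cond_pos. lra. }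
    apply (loc00 _ _ Hr). intros x y Hx Hy. cbn [fst snd].
    apply ballR. rewrite HF0, Rminus_0_r.
    set (r := Rmin del' (Rmin 1 (eps / (2 * C + 2)))) in *.
    pose proof (Rmin_l del' (Rmin 1 (eps / (2 * C + 2)))). pose proof (Rmin_r del' (Rmin 1 (eps / (2 * C + 2)))).
    pose proof (Rmin_l 1 (eps / (2 * C + 2))). pose proof (Rmin_r 1 (eps / (2 * C + 2))). fold r in H, H0.
    eapply Rle_lt_trans. apply B; lra.
    assert (Hq : qq x y <= 2 * r).
    { unfold qq. apply Rabs_def2 in Hx. apply Rabs_def2 in Hy. nra. }
    assert (Hr2 : r * (2 * C + 2) <= eps).
    { assert (r <= eps / (2 * C + 2)) by lra. apply (Rmult_le_compat_r (2 * C + 2)) in H3; [|lra].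
      field_simplify in H3; lra. }
    pose proof (cond_pos eps). nra.
Qed.

Lemma near0_mono d r x y : 0 < d -> d <= r -> near0 d x y -> near0 r x y.
Proof. unfold near0. intros. nra. Qed.

Lemma inv h rh r0 d G : 0 < r0 -> r0 <= rh -> SmR h rh ->
  (forall x y, near0 r0 x y -> 0 <= x -> y <= 0 -> h x y = 0) -> 0 < d -> d <= rh ->
  Ideal h G -> G 0 0 = 0 ->
  forall ds, exists g, Ideal h g /\ (forall x y, 0 < qq x y -> near0 d x y -> iter_pd ds G x y = g x y)
    /\ iter_pd ds G 0 0 = 0.
Proof.
  intros Hr0 Hrr Hs Hz Hd Hdr HG HG0 ds. induction ds as [|b ds IH].
  - exists G. simpl. auto.
  - destruct IH as [g [Hg [Heq H0]]].
    destruct (origin_facts h rh r0 d (iter_pd ds G) g Hr0 Hrr Hs Hz Hd Hg Heq H0) as [Ox [Oy _]].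
    destruct b.
    + destruct (Ideal_dx h rh g Hs Hg) as [g' [Hg' Hd']].
      exists g'. split; auto. split.
      * intros x y Hq Hn. simpl. unfold pdx.
        transitivity (Derive (fun t => g t y) x).
        apply Derive_ext_loc. apply filter_imp with (2 := loc_x d x y Hq Hn). intros t [H1 H2]. apply Heq; auto.
        apply is_derive_unique. apply Hd'. lra. apply near0_mono with d; auto.
      * simpl. unfold pdx. apply is_derive_unique. exact Ox.
    + destruct (Ideal_dy h rh g Hs Hg) as [g' [Hg' Hd']].
      exists g'. split; auto. split.
      * intros x y Hq Hn. simpl. unfold pdy.
        transitivity (Derive (fun t => g x t) y).
        apply Derive_ext_loc. apply filter_imp with (2 := loc_y d x y Hq Hn). intros t [H1 H2]. apply Heq; auto.
        apply is_derive_unique. apply Hd'. lra. apply near0_mono with d; auto.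
      * simpl. unfold pdy. apply is_derive_unique. exact Oy.
Qed.

Lemma smooth_G h rh r0 d G : 0 < r0 -> r0 <= rh -> SmR h rh ->
  (forall x y, near0 r0 x y -> 0 <= x -> y <= 0 -> h x y = 0) -> 0 < d -> d <= rh ->
  Ideal h G -> G 0 0 = 0 -> SmR G d.
Proof.
  intros Hr0 Hrr Hs Hz Hd Hdr HG HG0 ds x y Hn.
  destruct (inv h rh r0 d G Hr0 Hrr Hs Hz Hd Hdr HG HG0 ds) as [g [Hg [Heq H0]]].
  destruct (Req_dec (qq x y) 0) as [Hq|Hq].
  - unfold qq in Hq. assert (x = 0) by nra. assert (y = 0) by nra. subst.
    destruct (origin_facts h rh r0 d (iter_pd ds G) g Hr0 Hrr Hs Hz Hd Hg Heq H0) as [Ox [Oy Oc]].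
    split; [|split]; auto. exists 0; auto. exists 0; auto.
  - assert (Hq' : 0 < qq x y) by (unfold qq in *; pose proof (Rle_0_sqr x); pose proof (Rle_0_sqr y); unfold Rsqr in *; lra).
    assert (Hnr : near0 rh x y) by (apply near0_mono with d; auto).
    destruct (Ideal_dx h rh g Hs Hg) as [gx [_ Hdx]].
    destruct (Ideal_dy h rh g Hs Hg) as [gy [_ Hdy]].
    split; [|split].
    + exists (gx x y). apply is_derive_ext_loc with (fun t => g t y).
      apply filter_imp with (2 := loc_x d x y Hq' Hn). intros t [H1 H2]. symmetry; apply Heq; auto.
      apply Hdx; auto.
    + exists (gy x y). apply is_derive_ext_loc with (fun t => g x t).
      apply filter_imp with (2 := loc_y d x y Hq' Hn). intros t [H1 H2]. symmetry; apply Heq; auto.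
      apply Hdy; auto.
    + apply continuous_ext_loc with (fun p : R * R => g (fst p) (snd p)).
      apply filter_imp with (2 := open_U d x y Hq' Hn). intros p [H1 H2]. symmetry; apply Heq; auto.
      apply (Ideal_cont h rh g Hs Hg); auto.
Qed.

Lemma m_one x y : 1 <= w x y -> ek 0 (w x y) * iD x y = 1.
Proof.
  intros H. unfold iD, Dn.
  assert (ek 0 (1 - w x y) = 0) by (unfold ek; destruct (Rlt_dec 0 (1 - w x y)); [lra|auto]).
  rewrite H0, Rplus_0_r. apply Rinv_r.
  unfold ek. destruct (Rlt_dec 0 (w x y)); [|lra]. simpl. rewrite Rmult_1_r. apply Rgt_not_eq, exp_pos.
Qed.

Lemma m_zero x y : w x y <= 0 -> ek 0 (w x y) = 0.
Proof. intros. unfold ek. destruct (Rlt_dec 0 (w x y)); [lra|auto]. Qed.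

Theorem lemma4p8 (h : R -> R -> R) :
  smooth_near0 h -> h 0 0 = 0 ->
  (exists e, 0 < e /\
     forall x y, near0 e x y -> 0 <= x -> y <= 0 -> h x y = 0) ->
  exists ht : R -> R -> R,
    smooth_near0 ht /\ ht 0 0 = 0 /\
    exists d, 0 < d /\
      (forall x y, near0 d x y -> 0 <= x -> ht x y = h x y) /\
      (forall x y, near0 d x y -> y <= 0 -> ht x y = 0).
Proof.
  intros [rh [Hrh Hs]] H00 [e [He Hz0]].
  set (r0 := Rmin e rh).
  assert (Hr0 : 0 < r0) by (apply Rmin_pos; auto).
  assert (Hre : r0 <= e /\ r0 <= rh) by (split; [apply Rmin_l | apply Rmin_r]).
  set (d := Rmin r0 (1/2)).
  assert (Hd : 0 < d) by (apply Rmin_pos; lra).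
  assert (Hdr : d <= r0 /\ d <= 1/2) by (split; [apply Rmin_l | apply Rmin_r]).
  assert (Hz : forall x y, near0 r0 x y -> 0 <= x -> y <= 0 -> h x y = 0).
  { intros. apply Hz0; auto. apply near0_mono with r0; tauto. }
  assert (Hs' : SmR h rh) by exact Hs.
  set (ht := fun x y => iter_pd nil h x y * (fun x y => ek 0 (w x y) * iD x y) x y).
  assert (Hht : Ideal h ht) by (apply I_gen; alg).
  assert (Hht0 : ht 0 0 = 0) by (unfold ht; simpl; rewrite H00; ring).
  exists ht. split; [|split; auto].
  { exists d. split; auto. apply (smooth_G h rh r0 d ht Hr0 (proj2 Hre) Hs' Hz Hd); auto. lra. }
  exists d. split; auto. split.
  - intros x y Hn Hx. unfold ht; simpl.
    destruct (Rle_dec y 0) as [Hy|Hy].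
    + rewrite Hz; auto. ring. apply near0_mono with d; auto; lra.
    + unfold near0 in Hn. apply Rnot_le_lt in Hy.
      assert (d * d <= 1/4) by nra.
      assert (x <= 1) by nra. assert (y <= 1) by nra.
      assert (x * x <= x) by nra. assert (y * y <= y) by nra.
      assert (Hq : 0 < qq x y) by (unfold qq; nra).
      assert (Hw : 1 <= w x y).
      { unfold w, iq. assert (qq x y <= x + y) by (unfold qq; lra).
        apply (Rmult_le_reg_r (qq x y)); auto. rewrite Rmult_assoc, Rinv_l; lra. }
      rewrite m_one; auto. ring.
  - intros x y Hn Hy. unfold ht; simpl.
    destruct (Rle_dec 0 x) as [Hx|Hx].
    + rewrite Hz; auto. ring. apply near0_mono with d; auto; lra.
    + unfold near0 in Hn. apply Rnot_le_lt in Hx.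
      assert (Hq : 0 < qq x y) by (unfold qq; nra).
      rewrite m_zero. ring. unfold w, iq.
      assert (0 < / qq x y) by (apply Rinv_0_lt_compat; auto). nra.
Qed.
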